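(* Let $n\ge 3$. There exists an anti-$\mathrm{SL}_2$-tiling of $\mathbb{Z}^n$, and it is unique up to translation: every anti-$\mathrm{SL}_2$-tiling $(b_{\mathbf{i}})$ of $\mathbb{Z}^n$ satisfies $b_{\mathbf{i}}=a_{\mathbf{i}+\mathbf{t}}$ for all $\mathbf{i}$ for some fixed $\mathbf{t}\in\mathbb{Z}^n$, where $a_{\mathbf{i}}=f(i_1+\dots+i_n)$ with $f(r)=F_{2r-1}$ for $r\ge1$ and $f(r)=F_{1-2r}$ for $r\le 0$. In particular, every two-dimensional slice of an anti-$\mathrm{SL}_2$-tiling of $\mathbb{Z}^n$ (obtained by fixing all but two coordinates of $\mathbf{i}$) is a translate of the staircase anti-$\mathrm{SL}_2$-tiling of $\mathbb{Z}^2$ given by $(i,j)\mapsto f(i+j)$, and all entries are odd-indexed Fibonacci numbers.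
   Context: Write $\mathbf{i}=(i_1,\dots,i_n)\in\mathbb{Z}^n$ and $\mathbf{e}_k$ for the $k$-th standard unit vector. An anti-$\mathrm{SL}_2$-tiling of $\mathbb{Z}^n$ is an array $(a_{\mathbf{i}})_{\mathbf{i}\in\mathbb{Z}^n}$ with all $a_{\mathbf{i}}\in\mathbb{Z}_{>0}$ such that for all $\mathbf{i}\in\mathbb{Z}^n$ and all $k\ne\ell$: $a_{\mathbf{i}+\mathbf{e}_\ell}a_{\mathbf{i}+\mathbf{e}_k}-a_{\mathbf{i}}a_{\mathbf{i}+\mathbf{e}_k+\mathbf{e}_\ell}=-1$. Fibonacci numbers are indexed $F_1=1,F_2=1,F_3=2,F_4=3,F_5=5,\dots$ with $F_{m+2}=F_{m+1}+F_m$. *)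

(* Defs.v *)
From HB Require Import structures.
From mathcomp Require Import all_boot all_order all_algebra.
Set Implicit Arguments. Unset Strict Implicit. Unset Printing Implicit Defensive.
Import Order.TTheory GRing.Theory Num.Theory.
Local Open Scope ring_scope.

(* Fibonacci numbers: fib 0 = 0, fib 1 = F_1 = 1, fib 2 = F_2 = 1, ... *)
Fixpoint fib (m : nat) : nat :=
  match m with
  | 0 => 0
  | 1 => 1
  | (k.+1 as m').+1 => fib m' + fib k
  end.

Definition unitv (n : nat) (k : 'I_n) : 'rV[int]_n := delta_mx 0 k.

Definition anti_SL2_tiling (n : nat) (a : 'rV[int]_n -> int) : Prop :=
  (forall i, 0 < a i) /\
  (forall (i : 'rV[int]_n) (k l : 'I_n), k != l ->
     a (i + unitv l) * a (i + unitv k) - a i * a (i + unitv k + unitv l) = -1).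

Definition fstair (r : int) : int :=
  if 1 <= r then (fib (absz (2 * r - 1)%R))%:Z else (fib (absz (1 - 2 * r)%R))%:Z.

Definition stair_tiling (n : nat) (i : 'rV[int]_n) : int :=
  fstair (\sum_(k < n) i 0 k).

(* Main.v *)
Require Import Defs.
From HB Require Import structures.
From mathcomp Require Import all_boot all_order all_algebra.
From mathcomp Require Import zify ring.
Import Order.TTheory GRing.Theory Num.Theory.
Local Open Scope ring_scope.

Definition G (m : nat) : int := (fib (2 * m).+1)%:Z.

Lemma fib_gt0 x : (0 < x)%N -> (0 < fib x)%N.
Proof.
case: x => // k _; elim: k => [//|k IH].
have -> : fib k.+2 = (fib k.+1 + fib k)%N by [].
lia.
Qed.

Lemma G_gt0 m : 0 < G m.
Proof. have := @fib_gt0 (2 * m).+1 isT. rewrite /G. lia. Qed.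

Lemma G_rec m : G m.+2 = 3 * G m.+1 - G m.
Proof.
rewrite /G.
have -> : (2 * m.+2).+1 = (2 * m).+4.+1 by lia.
have -> : (2 * m.+1).+1 = (2 * m).+3 by lia.
set k := (2 * m)%N.
have -> : fib k.+4.+1 = (fib k.+4 + fib k.+3)%N by [].
have -> : fib k.+4 = (fib k.+3 + fib k.+2)%N by [].
have -> : fib k.+3 = (fib k.+2 + fib k.+1)%N by [].
lia.
Qed.

Lemma G_cassini m : G m * G m.+2 = G m.+1 * G m.+1 + 1.
Proof.
elim: m => [|m IH]; first by [].
rewrite (G_rec m.+1); have := G_rec m; nia.
Qed.

Lemma fstair_posz k : fstair (k.+1)%:Z = G k.
Proof.
rewrite /fstair. have h : 1 <= (k.+1)%:Z by lia. rewrite h /G.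
congr (Posz (fib _)); lia.
Qed.

Lemma fstair_negz k : fstair (- (k.+1)%:Z) = G k.+1.
Proof.
rewrite /fstair. have h : (1 <= - (k.+1)%:Z) = false by lia. rewrite h /G.
congr (Posz (fib _)); lia.
Qed.

Lemma fstair_gt0 s : 0 < fstair s.
Proof.
rewrite /fstair; case: ifP => h; rewrite ltz_nat; apply: fib_gt0; lia.
Qed.

Lemma fstair_rec s : fstair s * fstair (s + 1 + 1) = fstair (s + 1) * fstair (s + 1) + 1.
Proof.
case: s => k.
  case: k => [|k]; first by [].
  have -> : (k.+1)%:Z + 1 = (k.+2)%:Z by lia.
  have -> : (k.+2)%:Z + 1 = (k.+3)%:Z by lia.
  rewrite !fstair_posz; exact: G_cassini.
case: k => [|k]; first by [].
case: k => [|k]; first by [].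
have -> : Negz k.+2 = - (k.+3)%:Z by [].
have -> : - (k.+3)%:Z + 1 = - (k.+2)%:Z by lia.
have -> : - (k.+2)%:Z + 1 = - (k.+1)%:Z by lia.
rewrite !fstair_negz mulrC; exact: G_cassini.
Qed.

Definition vsum {n : nat} (i : 'rV[int]_n) : int := \sum_(k < n) i 0 k.

Lemma vsumD {n} (u v : 'rV[int]_n) : vsum (u + v) = vsum u + vsum v.
Proof. rewrite /vsum -big_split; apply: eq_bigr => k _; by rewrite mxE. Qed.

Lemma vsumZ {n} x (u : 'rV[int]_n) : vsum (x *: u) = x * vsum u.
Proof. rewrite /vsum mulr_sumr; apply: eq_bigr => k _; by rewrite mxE. Qed.

Lemma vsum_e {n} (k : 'I_n) : vsum (unitv k) = 1.
Proof.
rewrite /vsum (bigD1 k) //= /unitv mxE !eqxx big1 ?addr0 // => j hj.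
by rewrite mxE (negbTE hj) andbF.
Qed.

Lemma vsum_sc {n} x (k : 'I_n) : vsum (x *: unitv k) = x.
Proof. by rewrite vsumZ vsum_e mulr1. Qed.

Lemma tile_eq {n} {b : 'rV[int]_n -> int} (hb : anti_SL2_tiling b) i k l : k != l ->
  b (i + unitv k + unitv l) * b i = b (i + unitv k) * b (i + unitv l) + 1.
Proof. move=> kl; have := hb.2 i k l kl; nia. Qed.

Lemma third {n} (hn : (3 <= n)%N) (k l : 'I_n) : exists2 m : 'I_n, m != k & m != l.
Proof.
pose v := if ((nat_of_ord k != 0) && (nat_of_ord l != 0))%N then 0%N
          else if ((nat_of_ord k != 1) && (nat_of_ord l != 1))%N then 1%N else 2%N.
have hv : (v < n)%N by rewrite /v; case: ifP => _; [lia | case: ifP => _; lia].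
exists (Ordinal hv); apply/negP => /eqP/(congr1 val) /=; rewrite /v;
  case: ifP => h1; try case: ifP => h2; lia.
Qed.

Lemma cube {n} (b : 'rV[int]_n -> int) (hb : anti_SL2_tiling b) (hn : (3 <= n)%N) i k l :
  k != l -> b (i + unitv k) = b (i + unitv l).
Proof.
move=> kl; have [m mk ml] := third hn k l.
have km : k != m by rewrite eq_sym.
have lm : l != m by rewrite eq_sym.
have E1 := tile_eq hb i k l kl.
have E2 := tile_eq hb i k m km.
have E3 := tile_eq hb i l m lm.
have E4 := tile_eq hb (i + unitv k) l m lm.
have E5 := tile_eq hb (i + unitv l) k m km.
rewrite [i + unitv l + unitv k]addrAC in E5.
have p0 := hb.1 (i + unitv k); have q0 := hb.1 (i + unitv l); have x0 := hb.1 i.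
move: E1 E2 E3 E4 E5 p0 q0 x0.
set x := b i; set p := b (i + unitv k); set q := b (i + unitv l).
set r := b (i + unitv m); set A := b (i + unitv k + unitv l).
set B := b (i + unitv k + unitv m); set C := b (i + unitv l + unitv m).
set D := b (i + unitv k + unitv l + unitv m).
move=> E1 E2 E3 E4 E5 p0 q0 x0.
have e4 : A * B = D * p - 1 by lia.
have e5 : A * C = D * q - 1 by lia.
have h : x * x * (p - q) = (p * q + 1) * (q - p).
  have -> : x * x * (p - q) = q * (A * x) * (B * x) - p * (A * x) * (C * x).
    have -> : p - q = q * (A * B) - p * (A * C) by rewrite e4 e5; ring.
    ring.
  rewrite E1 E2 E3; ring.
have : (p - q) * (x * x + p * q + 1) = 0 by nia.
move/eqP; rewrite mulf_eq0 => /orP [/eqP|/eqP]; nia.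
Qed.

Lemma line {n} {b : 'rV[int]_n -> int} {o0 : 'I_n}
  (H : forall i k, b (i + unitv k) = b (i + unitv o0)) :
  forall x i k, b (i + x *: unitv k) = b (i + x *: unitv o0).
Proof.
have H' : forall i k, b (i - unitv k) = b (i - unitv o0).
  move=> i k; have := H (i - unitv k - unitv o0) k.
  by rewrite addrAC subrK subrK.
have P : forall (N : nat) i k, b (i + N%:Z *: unitv k) = b (i + N%:Z *: unitv o0).
  elim=> [|N IH] i k; first by rewrite !scale0r.
  rewrite (_ : (N.+1)%:Z = N%:Z + 1); last by lia.
  rewrite !scalerDl !scale1r !addrA H addrAC IH.
  by rewrite addrAC.
have M : forall (N : nat) i k, b (i - N%:Z *: unitv k) = b (i - N%:Z *: unitv o0).
  elim=> [|N IH] i k; first by rewrite !scale0r.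
  rewrite (_ : (N.+1)%:Z = N%:Z + 1); last by lia.
  rewrite !scalerDl !scale1r !opprD !addrA H' addrAC IH.
  by rewrite addrAC.
move=> x i k; case: x => N; first exact: P.
by rewrite NegzE !scaleNr M.
Qed.

Lemma sum_line {n} {b : 'rV[int]_n -> int} {o0 : 'I_n}
  (H : forall i k, b (i + unitv k) = b (i + unitv o0)) :
  forall (s : seq 'I_n) (c : 'I_n -> int) j,
  b (j + \sum_(k <- s) c k *: unitv k) = b (j + (\sum_(k <- s) c k) *: unitv o0).
Proof.
elim=> [|a s IH] c j; first by rewrite !big_nil scale0r.
rewrite !big_cons.
have -> : j + (c a *: unitv a + \sum_(k <- s) c k *: unitv k)
   = (j + \sum_(k <- s) c k *: unitv k) + c a *: unitv a by rewrite addrCA addrC.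
rewrite (line H) addrAC IH scalerDl.
by rewrite addrA.
Qed.

Lemma b_vsum {n} {b : 'rV[int]_n -> int} {o0 : 'I_n}
  (H : forall i k, b (i + unitv k) = b (i + unitv o0)) i :
  b i = b (vsum i *: unitv o0).
Proof.
have := sum_line H (index_enum 'I_n) (fun k => i 0 k) 0.
rewrite !add0r => <-.
congr b; rewrite {1}[i]row_sum_delta; done.
Qed.

Lemma find_ones (h : int -> int) (hpos : forall s, 0 < h s)
  (hrec : forall s, h s * h (s + 1 + 1) = h (s + 1) * h (s + 1) + 1) :
  exists s0, h s0 = 1 /\ h (s0 + 1) = 1.
Proof.
suff : forall N : nat, forall s, h s <= N%:Z -> exists s0, h s0 = 1 /\ h (s0 + 1) = 1.
  move=> H; have := hpos 0; case E: (h 0) => [m|m] //= _; apply: (H m 0); by rewrite E.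
elim=> [|N IH] s hs; first by have := hpos s; lia.
have r := hrec (s - 1); rewrite subrK in r.
case: (lerP (h (s - 1)) N%:Z) => [/IH //| h1].
case: (lerP (h (s + 1)) N%:Z) => [/IH //| h2].
have p0 := hpos (s - 1); have q0 := hpos (s + 1); have m0 := hpos s.
have [e|ne] := eqVneq (h (s - 1)) (h s).
  rewrite e in r.
  have r' : h s * (h (s + 1) - h s) = 1 by lia.
  have hm : h s = 1 by case: (lerP (h (s + 1)) (h s)) => hd; nia.
  by exists (s - 1); rewrite subrK; split; lia.
have [e'|ne'] := eqVneq (h (s + 1)) (h s).
  rewrite e' in r.
  have r' : h s * (h (s - 1) - h s) = 1 by lia.
  have hm : h s = 1 by case: (lerP (h (s - 1)) (h s)) => hd; nia.
  by exists s; split; lia.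
have a1 : h s + 1 <= h (s - 1) by lia.
have a2 : h s + 1 <= h (s + 1) by lia.
nia.
Qed.

Lemma rec_uniq (h g : int -> int) (gpos : forall s, 0 < g s)
  (hrec : forall s, h s * h (s + 1 + 1) = h (s + 1) * h (s + 1) + 1)
  (grec : forall s, g s * g (s + 1 + 1) = g (s + 1) * g (s + 1) + 1) a :
  h a = g a -> h (a + 1) = g (a + 1) -> forall s, h s = g s.
Proof.
move=> ha ha1.
have fw : forall k : nat, h (a + k%:Z) = g (a + k%:Z) /\ h (a + k%:Z + 1) = g (a + k%:Z + 1).
  elim=> [|k [IH1 IH2]]; first by rewrite addr0.
  have -> : a + (k.+1)%:Z = a + k%:Z + 1 by lia.
  split => //.
  move: (hrec (a + k%:Z)) (grec (a + k%:Z)); rewrite IH1 IH2 => r1 r2.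
  have nz : g (a + k%:Z) != 0 by have := gpos (a + k%:Z); lia.
  exact: (mulfI nz (etrans r1 (esym r2))).
have bw : forall k : nat, h (a - k%:Z) = g (a - k%:Z) /\ h (a - k%:Z + 1) = g (a - k%:Z + 1).
  elim=> [|k [IH1 IH2]]; first by rewrite subr0.
  have e : a - k%:Z = a - (k.+1)%:Z + 1 by lia.
  rewrite -e; split => //.
  move: (hrec (a - (k.+1)%:Z)) (grec (a - (k.+1)%:Z)); rewrite -!e IH1 IH2 => r1 r2.
  have nz : g (a - k%:Z + 1) != 0 by have := gpos (a - k%:Z + 1); lia.
  exact: (mulIf nz (etrans r1 (esym r2))).
move=> s; case: (lerP a s) => hs.
  have := (fw `|s - a|%N).1; have -> : a + `|s - a|%N%:Z = s by lia. done.
have := (bw `|a - s|%N).1; have -> : a - `|a - s|%N%:Z = s by lia. done.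
Qed.

Theorem theorem2p3 (n : nat) (hn : (3 <= n)%N) :
  (exists a : 'rV[int]_n -> int, anti_SL2_tiling a) /\
  (forall b : 'rV[int]_n -> int, anti_SL2_tiling b ->
     exists t : 'rV[int]_n, forall i, b i = stair_tiling (i + t)) /\
  (forall b : 'rV[int]_n -> int, anti_SL2_tiling b ->
     forall (i : 'rV[int]_n) (k l : 'I_n), k != l ->
       exists s : int, forall x y : int,
         b (i + x *: unitv k + y *: unitv l) = fstair (x + y + s)) /\
  (forall b : 'rV[int]_n -> int, anti_SL2_tiling b ->
     forall i, exists m : nat, b i = (fib (2 * m).+1)%:Z).
Proof.
have h0 : (0 < n)%N by lia.
have h1 : (1 < n)%N by lia.
pose o0 : 'I_n := Ordinal h0.
pose o1 : 'I_n := Ordinal h1.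
have o01 : o0 != o1 by apply/eqP => /(congr1 val).
have stair_vsum : forall i, stair_tiling i = fstair (vsum i) by [].
have ex : anti_SL2_tiling (@stair_tiling n).
  split => [i|i k l kl]; first exact: fstair_gt0.
  rewrite !stair_vsum !vsumD !vsum_e.
  have := fstair_rec (vsum i); lia.
have uniq : forall b : 'rV[int]_n -> int, anti_SL2_tiling b -> exists s0, forall i, b i = fstair (vsum i - s0).
  move=> b hb.
  have H : forall i k, b (i + unitv k) = b (i + unitv o0).
    move=> i k; case: (eqVneq k o0) => [->//|ko]; exact: (@cube _ b hb hn i k o0 ko).
  pose h s := b (s *: unitv o0).
  have bh : forall i, b i = h (vsum i) := b_vsum H.
  have hpos : forall s, 0 < h s := fun s => hb.1 _.
  have hrec : forall s, h s * h (s + 1 + 1) = h (s + 1) * h (s + 1) + 1.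
    move=> s; have := tile_eq hb (s *: unitv o0) o0 o1 o01.
    rewrite !bh !vsumD !vsum_sc !vsum_e => e; rewrite mulrC; exact: e.
  have [s0 [e0 e1]] := @find_ones h hpos hrec.
  exists s0 => i; rewrite bh.
  apply: (@rec_uniq h (fun s => fstair (s - s0)) (fun s => fstair_gt0 _) hrec _ s0).
  - move=> s /=.
    have -> : s + 1 + 1 - s0 = s - s0 + 1 + 1 by lia.
    have -> : s + 1 - s0 = s - s0 + 1 by lia.
    exact: fstair_rec.
  - by rewrite /= subrr e0.
  - by rewrite /= (_ : s0 + 1 - s0 = 1) ?e1 //; lia.
split; first by exists (@stair_tiling n).
have part2 : forall b : 'rV[int]_n -> int, anti_SL2_tiling b ->
     exists t : 'rV[int]_n, forall i, b i = stair_tiling (i + t).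
  move=> b hb; have [s0 hs] := uniq b hb; exists ((- s0) *: unitv o0) => i.
  by rewrite hs stair_vsum vsumD vsum_sc.
split; first exact: part2.
split.
  move=> b hb i k l kl; have [t ht] := part2 b hb.
  exists (vsum i + vsum t) => x y.
  rewrite ht stair_vsum !vsumD !vsum_sc; congr fstair; lia.
move=> b hb i; have [t ht] := part2 b hb; rewrite ht stair_vsum.
move: (vsum _) => r; rewrite /fstair; case: ifP => hr;
  [exists `|r - 1|%N | exists `|- r|%N]; congr (Posz (fib _)); lia.
Qed.
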